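(* Let $w,w'\in S_n$ be such that $w$ covers $w'$ in the Bruhat order, with $w=w'\cdot(i,j)$ for positions $i<j$. Let $\alpha=\mathsf{code}(w)$ and $\alpha'=\mathsf{code}(w')$. Let $\underline{w}^{(I)}$ be the reduced word of $w'$ obtained by deleting the $I$-th letter of the row-reading word $\underline{w}$ of $w$, and let $\underline{w'}$ be the row-reading word of $w'$. Then there exists a sequence $f_1f_2\cdots f_p$ of moves, each a commutation or a braid move, transforming $\underline{w}^{(I)}$ into $\underline{w'}$, such that $$\#\{k: f_k \text{ is a braid move}\}=(\alpha_i-\alpha_i'-1)(j-i-1+\alpha_j-\alpha_i'),$$ $$\#\{k: f_k \text{ is a commutation}\}=(\alpha_i-\alpha_i'-1)\Big(\Big(\sum_{k=i}^{j-1}\alpha_k'\Big)-2(j-i-1+\alpha_j-\alpha_i')\Big).$$ Moreover, for any other sequence $g_1g_2\cdots g_q$ of commutations and braid moves transforming $\underline{w}^{(I)}$ into $\underline{w'}$, the number of braid moves among the $g_k$ has the same parity as the number of braid moves among the $f_k$, and likewise for the numbers of commutations.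
   Context: $S_n$ is generated by the simple reflections $s_m=(m,m+1)$, $m\in[n-1]$; permutations are written in one-line notation and $w\cdot(i,j)$ swaps the entries in positions $i$ and $j$. $\ell(w)$ is the number of inversions. The code of $w$ is $\alpha=(\alpha_1,\dots,\alpha_{n-1})$ with $\alpha_m=\#\{k>m: w(k)<w(m)\}$ (set $\alpha_n=0$). The row-reading word of $w$ is $\underline{w}=\underline{w}_1\underline{w}_2\cdots\underline{w}_{n-1}$, where $\underline{w}_m=s_{\alpha_m+m-1}s_{\alpha_m+m-2}\cdots s_{m+1}s_m$ if $\alpha_m>0$ and $\underline{w}_m$ is empty otherwise; it is a reduced word for $w$. $w$ covers $w'$ means $w'<w$ in the Bruhat order with $\ell(w')=\ell(w)-1$; equivalently $w=w'\cdot(i,j)$ with $i<j$, $w'(i)<w'(j)$ and no $k$ with $i<k<j$ and $w'(i)<w'(k)<w'(j)$. In this situation, writing $\underline{w}=s_{r_1}\cdots s_{r_\ell}$, there is a unique index $I$ such that $s_{r_1}\cdots\widehat{s_{r_I}}\cdots s_{r_\ell}$ is a reduced word for $w'$; this word is denoted $\underline{w}^{(I)}$. A commutation replaces two adjacent letters $s_as_b$ with $|a-b|\ge2$ by $s_bs_a$; a braid move replaces three adjacent letters $s_as_{a+1}s_a$ by $s_{a+1}s_as_{a+1}$ or vice versa. *)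

(* Defs.v *)
(* Conventions (all 0-indexed):
   - a permutation of S_n is its one-line notation: a seq nat w with
     perm_eq w (iota 0 n), i.e. values 0..n-1 (value v stands for v+1);
   - position k (0-based) stands for position k+1 of the paper;
   - letter m of a word stands for the simple reflection s_{m+1} = (m+1, m+2). *)
From mathcomp Require Import all_boot.
Set Implicit Arguments. Unset Strict Implicit. Unset Printing Implicit Defensive.

Definition is_perm (n : nat) (w : seq nat) : Prop := perm_eq w (iota 0 n).

(* w . (i,j) : swap the entries in positions i and j *)
Definition swap_pos (w : seq nat) (i j : nat) : seq nat :=
  set_nth 0 (set_nth 0 w i (nth 0 w j)) j (nth 0 w i).

(* the permutation s_{r_1} ... s_{r_l} of S_n, in one-line notation:
   id . s_{r_1} . ... . s_{r_l} *)
Definition word_perm (n : nat) (r : seq nat) : seq nat :=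
  foldl (fun w m => swap_pos w m m.+1) (iota 0 n) r.

Definition inversions (w : seq nat) : nat :=
  \sum_(a < size w) \sum_(b < size w | a < b) (nth 0 w b < nth 0 w a).

Definition reduced_word (n : nat) (r : seq nat) (w : seq nat) : Prop :=
  all (fun m => m.+1 < n) r /\ word_perm n r = w /\ size r = inversions w.

Definition code (w : seq nat) (k : nat) : nat :=
  count (fun l => nth 0 w l < nth 0 w k) (iota k.+1 (size w - k.+1)).

(* row-reading word: block for position m is s_{alpha_m+m-1} ... s_{m+1} s_m *)
Definition row_word (w : seq nat) : seq nat :=
  flatten [seq rev (iota m (code w m)) | m <- iota 0 (size w)].

Definition delete_at (I : nat) (r : seq nat) : seq nat :=
  take I r ++ drop I.+1 r.

Inductive move_kind := Commutation | Braid.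

Definition is_braid (k : move_kind) : bool := if k is Braid then true else false.
Definition is_comm (k : move_kind) : bool := if k is Commutation then true else false.

Definition move_step (k : move_kind) (u v : seq nat) : Prop :=
  match k with
  | Commutation => exists (p q : seq nat) (a b : nat),
      (b + 2 <= a \/ a + 2 <= b) /\ u = p ++ [:: a; b] ++ q /\ v = p ++ [:: b; a] ++ q
  | Braid => exists (p q : seq nat) (a : nat),
      (u = p ++ [:: a; a.+1; a] ++ q /\ v = p ++ [:: a.+1; a; a.+1] ++ q) \/
      (u = p ++ [:: a.+1; a; a.+1] ++ q /\ v = p ++ [:: a; a.+1; a] ++ q)
  end.

Inductive move_seq : seq nat -> seq move_kind -> seq nat -> Prop :=
  | move_seq_nil u : move_seq u [::] u
  | move_seq_cons k ks u v w : move_step k u v -> move_seq v ks w ->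
      move_seq u (k :: ks) w.

Definition n_braids (ks : seq move_kind) : nat := count is_braid ks.
Definition n_comms (ks : seq move_kind) : nat := count is_comm ks.

(* Main.v *)
Require Import Defs.
From mathcomp Require Import all_boot all_order all_algebra.
From mathcomp Require Import zify ring.
Import GRing.Theory Num.Theory.
Set Implicit Arguments. Unset Strict Implicit. Unset Printing Implicit Defensive.

Definition sw (st : seq nat) (a : nat) := swap_pos st a a.+1.

Lemma word_permE n r : word_perm n r = foldl sw (iota 0 n) r.
Proof. by []. Qed.

Lemma nth_catl' (p q : seq nat) k : k < size p -> nth 0 (p ++ q) k = nth 0 p k.
Proof. by move=> h; rewrite nth_cat h. Qed.

Lemma sw_cat p y z q : sw (p ++ y :: z :: q) (size p) = p ++ z :: y :: q.
Proof.
rewrite /sw /swap_pos.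
elim: p => [|x p IH] //=.
by rewrite IH.
Qed.

Lemma seq_decomp2 (s : seq nat) a : a.+1 < size s ->
  exists p y z q, s = p ++ y :: z :: q /\ size p = a.
Proof.
move=> h; exists (take a s), (nth 0 s a), (nth 0 s a.+1), (drop a.+2 s); split; last first.
  by rewrite size_take; case: ifP => //; lia.
rewrite -{1}(cat_take_drop a s); congr (_ ++ _).
rewrite (drop_nth 0); last lia.
by rewrite (drop_nth 0).
Qed.

Lemma size_sw st a : a.+1 < size st -> size (sw st a) = size st.
Proof.
move=> h; have [p [y [z [q [-> <-]]]]] := seq_decomp2 h.
by rewrite sw_cat !size_cat.
Qed.

Lemma perm_sw st a : a.+1 < size st -> perm_eq (sw st a) st.
Proof.
move=> h; have [p [y [z [q [-> <-]]]]] := seq_decomp2 h.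
rewrite sw_cat perm_cat2l.
by rewrite -[y :: z :: q]/([:: y; z] ++ q) -[z :: y :: q]/([:: z; y] ++ q) perm_cat2r; by rewrite (perm_catC [:: z] [:: y]).
Qed.

Definition lok n (r : seq nat) := all (fun m => m.+1 < n) r.

Lemma perm_foldl st r : lok (size st) r -> perm_eq (foldl sw st r) st.
Proof.
elim: r st => [|a r IH] st //= /andP [ha hr].
have hs := size_sw ha.
apply: perm_trans (IH _ _) (perm_sw ha).
by rewrite hs.
Qed.

Lemma size_foldl st r : lok (size st) r -> size (foldl sw st r) = size st.
Proof. by move=> h; apply: perm_size; apply: perm_foldl. Qed.

Lemma move_seq_cat u ks v ls x : move_seq u ks v -> move_seq v ls x -> move_seq u (ks ++ ls) x.
Proof.
elim=> [u0|k ks0 u0 v0 w0 hs hm IH] //= h.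
by apply: move_seq_cons hs (IH h).
Qed.

Lemma move_step_ctx k p q u v : move_step k u v -> move_step k (p ++ u ++ q) (p ++ v ++ q).
Proof.
case: k => /=.
  move=> [p0 [q0 [a [b [hab [-> ->]]]]]].
  exists (p ++ p0), (q0 ++ q), a, b; split => //; by rewrite !catA -!(catA _ _ q) -!catA.
move=> [p0 [q0 [a h]]]; exists (p ++ p0), (q0 ++ q), a.
by case: h => [[-> ->]|[-> ->]]; [left|right]; rewrite !catA -!(catA _ _ q) -!catA.
Qed.

Lemma move_seq_ctx p q u ks v : move_seq u ks v -> move_seq (p ++ u ++ q) ks (p ++ v ++ q).
Proof.
elim=> [u0|k ks0 u0 v0 w0 hs hm IH]; first by constructor.
by apply: move_seq_cons (move_step_ctx p q hs) IH.
Qed.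

Lemma lok_sub n (u v : seq nat) : {subset v <= u} -> lok n u -> lok n v.
Proof. by move=> hs /allP h; apply/allP => x /hs /h. Qed.

Lemma lok_step n k u v : move_step k u v -> lok n u -> lok n v.
Proof.
case: k => /=.
  move=> [p0 [q0 [a [b [hab [-> ->]]]]]].
  apply: lok_sub => x; rewrite !mem_cat !in_cons ?in_nil ?orbF.
  by case: (x \in p0) (x == a) (x == b) (x \in q0) => [] [] [] [].
move=> [p0 [q0 [a [[-> ->]|[-> ->]]]]];
  apply: lok_sub => x; rewrite !mem_cat !in_cons ?in_nil ?orbF;
  by case: (x \in p0) (x == a) (x == a.+1) (x \in q0) => [] [] [] [].
Qed.

Fixpoint prs (st : seq nat) (r : seq nat) : seq (nat * nat) :=
  if r is a :: r' then (nth 0 st a, nth 0 st a.+1) :: prs (sw st a) r' else [::].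

Lemma prs_cat st p q : prs st (p ++ q) = prs st p ++ prs (foldl sw st p) q.
Proof. by elim: p st => [|a p IH] st //=; rewrite IH. Qed.

Fixpoint cnt (r : nat * nat -> nat * nat -> bool) (s : seq (nat * nat)) : nat :=
  if s is x :: s' then count (r x) s' + cnt r s' else 0.

Lemma cnt_swap r p x y q : cnt r (p ++ x :: y :: q) + r y x = cnt r (p ++ y :: x :: q) + r x y.
Proof.
elim: p => [|z p IH] /=.
  lia.
rewrite !count_cat /=. lia.
Qed.

Lemma cnt_rev3 r p x y z q : cnt r (p ++ x :: y :: z :: q) + (r y x + r z x + r z y) =
   cnt r (p ++ z :: y :: x :: q) + (r x y + r x z + r y z).
Proof.
have h1 := cnt_swap r p x y (z :: q).
have h2 := cnt_swap r (rcons p y) x z q.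
have h3 := cnt_swap r p y z (x :: q).
rewrite -cats1 -!catA /= in h2.
lia.
Qed.

Definition disj (p q : nat * nat) := [&& p.1 != q.1, p.1 != q.2, p.2 != q.1 & p.2 != q.2].
Definition ltp (p q : nat * nat) := (p.1 < q.1) || ((p.1 == q.1) && (p.2 < q.2)).
Definition r1 p q := disj p q && ltp q p.
Definition r2 p q := ~~ disj p q && ltp q p.

Lemma ltp_tot p q : p != q -> ltp p q + ltp q p = 1.
Proof.
case: p q => [a b] [c d]; rewrite /ltp /= xpair_eqE.
case: (ltngtP a c) => //= _; by case: (ltngtP b d).
Qed.

Definition inv1 n r := odd (cnt r1 (prs (iota 0 n) r)).
Definition inv2 n r := odd (cnt r2 (prs (iota 0 n) r)).

Lemma nth_sw st a k : nth 0 (sw st a) k =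
  if k == a.+1 then nth 0 st a else if k == a then nth 0 st a.+1 else nth 0 st k.
Proof. by rewrite /sw /swap_pos !nth_set_nth /= !nth_set_nth. Qed.

Lemma size_sw' st a : size (sw st a) = maxn a.+2 (maxn a.+1 (size st)).
Proof. by rewrite /sw /swap_pos !size_set_nth. Qed.

Ltac crush_nth := repeat (case: eqP => /= ?);
  first [reflexivity | (exfalso; lia) | (congr (nth _ _ _); lia)].

Lemma sw_comm st a b : (b + 2 <= a \/ a + 2 <= b) -> sw (sw st a) b = sw (sw st b) a.
Proof.
move=> hab; apply: (@eq_from_nth _ 0).
  rewrite !size_sw'; lia.
by move=> k _; rewrite !nth_sw; crush_nth.
Qed.

Lemma sw_braid st a : sw (sw (sw st a) a.+1) a = sw (sw (sw st a.+1) a) a.+1.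
Proof.
apply: (@eq_from_nth _ 0).
  rewrite !size_sw'; lia.
by move=> k _; rewrite !nth_sw; crush_nth.
Qed.

Lemma neqS1 m : (m.+1 == m) = false. Proof. by apply/eqP; lia. Qed.
Lemma neqS2 m : (m.+2 == m) = false. Proof. by apply/eqP; lia. Qed.
Lemma neqS1' m : (m == m.+1) = false. Proof. by apply/eqP; lia. Qed.
Lemma neqS2' m : (m == m.+2) = false. Proof. by apply/eqP; lia. Qed.

Lemma win_comm s a b : uniq s -> a.+1 < size s -> b.+1 < size s -> (b + 2 <= a \/ a + 2 <= b) ->
  exists P1 P2, prs s [:: a; b] = [:: P1; P2] /\ prs s [:: b; a] = [:: P2; P1] /\
    disj P1 P2 /\ disj P2 P1.
Proof.
move=> us ha hb hab.
exists (nth 0 s a, nth 0 s a.+1), (nth 0 s b, nth 0 s b.+1).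
rewrite /= !nth_sw.
have e1 : (b == a.+1) = false by apply/eqP; lia.
have e2 : (b == a) = false by apply/eqP; lia.
have e3 : (b.+1 == a.+1) = false by apply/eqP; lia.
have e4 : (b.+1 == a) = false by apply/eqP; lia.
have e5 : (a == b.+1) = false by apply/eqP; lia.
have e6 : (a == b) = false by apply/eqP; lia.
have e7 : (a.+1 == b.+1) = false by apply/eqP; lia.
have e8 : (a.+1 == b) = false by apply/eqP; lia.
rewrite e1 e2 e3 e4 e5 e6 e7 e8; split => //; split => //.
rewrite /disj /= !nth_uniq //; try lia; by rewrite e1 e2 e3 e4 e5 e6 e7 e8.
Qed.

Lemma win_braid s a : uniq s -> a.+2 < size s ->
  exists x y z, prs s [:: a; a.+1; a] = [:: x; y; z] /\ prs s [:: a.+1; a; a.+1] = [:: z; y; x] /\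
   [&& ~~ disj x y, ~~ disj x z, ~~ disj y z, ~~ disj y x, ~~ disj z x & ~~ disj z y] /\
   [&& x != y, x != z & y != z].
Proof.
move=> us ha.
exists (nth 0 s a, nth 0 s a.+1), (nth 0 s a, nth 0 s a.+2), (nth 0 s a.+1, nth 0 s a.+2).
rewrite /= !nth_sw /= ?eqxx ?neqS1 ?neqS2 ?neqS1' ?neqS2' /=.
split => //; split => //; split.
  by rewrite /disj /= !eqxx /= ?andbF.
rewrite !xpair_eqE /= !nth_uniq //; try lia; by rewrite ?eqxx ?neqS1 ?neqS2 ?neqS1' ?neqS2' /= ?andbF.
Qed.

Lemma parity_shift a b x y : a + x = b + y -> odd b = odd a (+) odd (x + y).
Proof.
move=> /(congr1 odd); rewrite !oddD.
by case: (odd a) (odd b) (odd x) (odd y) => [] [] [] [].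
Qed.

Lemma r_tot (r : nat * nat -> nat * nat -> bool) p q :
  r = r2 -> ~~ disj p q -> ~~ disj q p -> p != q -> r p q + r q p = 1.
Proof.
move=> -> h1 h2 h3; rewrite /r2 h1 h2 /=.
rewrite addnC; exact: ltp_tot.
Qed.

Lemma step_inv st k u v : uniq st -> lok (size st) u -> move_step k u v ->
  [/\ foldl sw st u = foldl sw st v,
      odd (cnt r1 (prs st v)) = odd (cnt r1 (prs st u)) (+) is_comm k &
      odd (cnt r2 (prs st v)) = odd (cnt r2 (prs st u)) (+) is_braid k].
Proof.
move=> ust hl; case: k => /=.
  move=> [p [q [a [b [hab [eu ev]]]]]].
  move: hl; rewrite eu ev /lok !all_cat /= => /and4P [hp ha hb hq].
  rewrite -[a :: b :: q]/([:: a; b] ++ q) -[b :: a :: q]/([:: b; a] ++ q).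
  set s := foldl sw st p.
  have us : uniq s by rewrite (perm_uniq (perm_foldl hp)).
  have ss : size s = size st by apply: size_foldl.
  have [P1 [P2 [e1 [e2 [d1 d2]]]]] := win_comm us (ltac:(by rewrite ss) : a.+1 < size s) (ltac:(by rewrite ss) : b.+1 < size s) hab.
  have fe : foldl sw s [:: a; b] = foldl sw s [:: b; a] by rewrite /= sw_comm.
  rewrite !foldl_cat -/s fe; split => //; rewrite !prs_cat -/s e1 e2 -fe /=.
    set Q := prs _ q.
    have := cnt_swap r1 (prs st p) P1 P2 Q; move/parity_shift => ->.
    rewrite /r1 d1 d2 /= addnC ltp_tot //.
    by apply/negP => /eqP E; move: d1; rewrite E /disj eqxx.
  set Q := prs _ q.
  have := cnt_swap r2 (prs st p) P1 P2 Q; move/parity_shift => ->.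
  by rewrite /r2 d1 d2 /= addbF.
move=> [p [q [a hh]]].
have key : forall u v, u = p ++ [:: a; a.+1; a] ++ q -> v = p ++ [:: a.+1; a; a.+1] ++ q ->
   lok (size st) u -> [/\ foldl sw st u = foldl sw st v,
      odd (cnt r1 (prs st v)) = odd (cnt r1 (prs st u)) &
      odd (cnt r2 (prs st v)) = odd (cnt r2 (prs st u)) (+) true].
  move=> u0 v0 eu ev hl0.
  have hp : lok (size st) p by move: hl0; rewrite eu /lok all_cat => /andP [].
  have ha : a.+2 < size st by move: hl0; rewrite eu /lok !all_cat /= => /andP [_ /andP [/and4P [_ h _ _] _]].
  rewrite eu ev.
  set s := foldl sw st p.
  have us : uniq s by rewrite (perm_uniq (perm_foldl hp)).
  have ss : size s = size st by apply: size_foldl.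
  have [x [y [z [e1 [e2 [/and5P [d1 d2 d3 d4 /andP [d5 d6]] /and3P [n1 n2 n3]]]]]]] :=
     win_braid us (ltac:(by rewrite ss) : a.+2 < size s).
  have fe : foldl sw s [:: a; a.+1; a] = foldl sw s [:: a.+1; a; a.+1] by rewrite /= sw_braid.
  rewrite !foldl_cat -/s fe; split => //; rewrite !prs_cat -/s e1 e2 -fe /=.
    set Q := prs _ q.
    have := cnt_rev3 r1 (prs st p) x y z Q; move/parity_shift => ->.
    have f1 : forall p q, ~~ disj p q -> r1 p q = false by move=> p0 q0 h; rewrite /r1 (negbTE h).
    by rewrite (f1 _ _ d1) (f1 _ _ d2) (f1 _ _ d3) (f1 _ _ d4) (f1 _ _ d5) (f1 _ _ d6) addbF.
  set Q := prs _ q.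
  have := cnt_rev3 r2 (prs st p) x y z Q; move/parity_shift => ->.
  have t1 := r_tot erefl d1 d4 n1.
  have t2 := r_tot erefl d2 d5 n2.
  have t3 := r_tot erefl d3 d6 n3.
  move: t1 t2 t3.
  by case: (r2 x y) (r2 y x) (r2 x z) (r2 z x) (r2 y z) (r2 z y) => [] [] [] [] [] [].
case: hh => [[eu ev]|[eu ev]].
  by have [h1 h2 h3] := key u v eu ev hl; split; rewrite ?addbF.
have hl' : lok (size st) v.
  move: hl; rewrite eu ev /lok !all_cat /= => /and5P [-> h1 h2 h3 ->].
  by rewrite h1 h2.
have [f1 f2 f3] := key v u ev eu hl'.
split; [by rewrite f1 | by rewrite f2 addbF | ].
by rewrite f3 -addbA addbb addbF.
Qed.

Lemma seq_inv st u ks v : uniq st -> lok (size st) u -> move_seq u ks v ->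
  [/\ foldl sw st u = foldl sw st v, lok (size st) v,
      odd (cnt r1 (prs st v)) = odd (cnt r1 (prs st u)) (+) odd (n_comms ks) &
      odd (cnt r2 (prs st v)) = odd (cnt r2 (prs st u)) (+) odd (n_braids ks)].
Proof.
move=> ust hl hm; elim: hm hl => [u0|k ks0 u0 v0 w0 hs hm IH] hl0.
  by rewrite /n_comms /n_braids /= !addbF.
have [e1 e2 e3] := step_inv ust hl0 hs.
have [f1 f2 f3 f4] := IH (lok_step hs hl0).
split => //; first by rewrite e1.
  by rewrite f3 e2 /n_comms /= oddD addbA; case: k {hs e2 e3}.
by rewrite f4 e3 /n_braids /= oddD addbA; case: k {hs e2 e3}.
Qed.

Lemma parity_unique n u t fs gs : lok n u -> move_seq u fs t -> move_seq u gs t ->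
  odd (n_braids gs) = odd (n_braids fs) /\ odd (n_comms gs) = odd (n_comms fs).
Proof.
move=> hl hf hg.
have us : uniq (iota 0 n) := iota_uniq 0 n.
have hl' : lok (size (iota 0 n)) u by rewrite size_iota.
have [_ _ a1 a2] := seq_inv us hl' hf.
have [_ _ b1 b2] := seq_inv us hl' hg.
split.
  move: a2; rewrite b2 => /(congr1 (addb (odd (cnt r2 (prs (iota 0 n) u))))).
  by rewrite !addbA addbb !addFb.
move: a1; rewrite b1 => /(congr1 (addb (odd (cnt r1 (prs (iota 0 n) u))))).
by rewrite !addbA addbb !addFb.
Qed.

Definition blk t L := rev (iota t L).

Lemma comm_through x s : all (fun y => (y + 2 <= x) || (x + 2 <= y)) s ->
  move_seq (x :: s) (nseq (size s) Commutation) (rcons s x).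
Proof.
elim: s => [|y s IH] /=; first by constructor.
move=> /andP [hy hs].
apply: (@move_seq_cons _ _ _ (y :: x :: s)).
  exists [::], s, x, y; split => //; case/orP: hy => h; [left|right]; lia.
by have := move_seq_ctx [:: y] [::] (IH hs); rewrite !cats0.
Qed.

Lemma n_braids_cat a b : n_braids (a ++ b) = n_braids a + n_braids b.
Proof. exact: count_cat. Qed.
Lemma n_comms_cat a b : n_comms (a ++ b) = n_comms a + n_comms b.
Proof. exact: count_cat. Qed.
Lemma n_braids_nseq m : n_braids (nseq m Commutation) = 0.
Proof. by elim: m. Qed.
Lemma n_comms_nseq m : n_comms (nseq m Commutation) = m.
Proof. by elim: m => //= m ->. Qed.

Lemma mem_blk y t L : (y \in blk t L) = (t <= y < t + L).
Proof. by rewrite /blk mem_rev mem_iota. Qed.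

Lemma blk_split x t L : t <= x -> x + 2 <= t + L ->
  blk t L = blk (x + 2) (t + L - x - 2) ++ [:: x.+1; x] ++ blk t (x - t).
Proof.
move=> h1 h2; rewrite /blk.
have -> : L = (x - t) + (2 + (t + L - x - 2)) by lia.
rewrite iotaD iotaD /= rev_cat /= rev_cons rev_cons -!cats1 -!catA /=.
have -> : t + (x - t) = x by lia.
by have -> : t + (x - t + (2 + (t + L - x - 2))) - x - 2 = t + L - x - 2 by lia.
Qed.

Lemma braid_through x t L : t <= x -> x + 2 <= t + L ->
  exists ks, move_seq (x :: blk t L) ks (blk t L ++ [:: x.+1]) /\
     n_braids ks = 1 /\ n_comms ks = L - 2.
Proof.
move=> h1 h2; rewrite (blk_split h1 h2).
set H := blk (x + 2) _; set T := blk t (x - t).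
have cH : all (fun y => (y + 2 <= x) || (x + 2 <= y)) H.
  by apply/allP => y; rewrite mem_blk => /andP [a b]; apply/orP; right.
have cT : all (fun y => (y + 2 <= x.+1) || (x.+1 + 2 <= y)) T.
  by apply/allP => y; rewrite mem_blk => /andP [a b]; apply/orP; left; lia.
have m1 := move_seq_ctx [::] ([:: x.+1; x] ++ T) (comm_through cH).
have m2 : move_seq (rcons H x ++ [:: x.+1; x] ++ T) [:: Braid] (H ++ [:: x.+1; x; x.+1] ++ T).
  apply: (move_seq_cons (v := H ++ [:: x.+1; x; x.+1] ++ T)); last by constructor.
  by exists H, T, x; left; rewrite -cats1 -catA.
have m3 := move_seq_ctx (H ++ [:: x.+1; x]) [::] (comm_through cT).
exists (nseq (size H) Commutation ++ [:: Braid] ++ nseq (size T) Commutation); split.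
  apply: move_seq_cat m1 _; apply: move_seq_cat m2 _.
  move: m3; rewrite cats0 -!catA /= -cats1 -!catA /=.
  by rewrite !cats1.
rewrite !n_braids_cat !n_comms_cat !n_braids_nseq !n_comms_nseq /= /H /T /blk !size_rev !size_iota.
split => //; lia.
Qed.

Definition blocks (L : nat -> nat) k0 len := flatten [seq blk k (L k) | k <- iota k0 len].

Lemma blocks_S L k0 len : blocks L k0 len.+1 = blocks L k0 len ++ blk (k0 + len) (L (k0 + len)).
Proof. by rewrite /blocks -addn1 iotaD map_cat flatten_cat /= cats0. Qed.

Lemma pass_range (L f : nat -> nat) k0 len :
  (forall k, k0 <= k < k0 + len ->
     (f k.+1 = f k /\ (k + L k < f k \/ f k + 2 <= k)) \/
     (f k.+1 = (f k).+1 /\ k <= f k /\ f k + 2 <= k + L k)) ->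
  exists ks, move_seq (f k0 :: blocks L k0 len) ks (blocks L k0 len ++ [:: f (k0 + len)]) /\
    f k0 + n_braids ks = f (k0 + len) /\
    n_comms ks + 2 * n_braids ks = sumn [seq L k | k <- iota k0 len].
Proof.
elim: len => [|len IH] hk.
  exists [::]; rewrite addn0 /blocks /=. split. exact: (@move_seq_nil [:: f k0]). split; lia.
have [ks [m1 [c1 c2]]] : exists ks, move_seq (f k0 :: blocks L k0 len) ks (blocks L k0 len ++ [:: f (k0 + len)]) /\
    f k0 + n_braids ks = f (k0 + len) /\
    n_comms ks + 2 * n_braids ks = sumn [seq L k | k <- iota k0 len].
  by apply: IH => k hk'; apply: hk; lia.
set k := k0 + len.
have hkk : k0 <= k < k0 + len.+1 by lia.
have [ls [m2 [d1 d2]]] : exists ls, move_seq (f k :: blk k (L k)) ls (blk k (L k) ++ [:: f k.+1]) /\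
     f k + n_braids ls = f k.+1 /\ n_comms ls + 2 * n_braids ls = L k.
  case: (hk k hkk) => [[e [h|h]]|[e [h1 h2]]].
  - exists (nseq (size (blk k (L k))) Commutation); rewrite e cats1; split.
      apply: comm_through; apply/allP => y; rewrite mem_blk => /andP [a b]; apply/orP; left; lia.
    rewrite n_braids_nseq n_comms_nseq /blk size_rev size_iota; split; lia.
  - exists (nseq (size (blk k (L k))) Commutation); rewrite e cats1; split.
      apply: comm_through; apply/allP => y; rewrite mem_blk => /andP [a b]; apply/orP; right; lia.
    rewrite n_braids_nseq n_comms_nseq /blk size_rev size_iota; split; lia.
  have [ls [m [b c]]] := braid_through h1 h2.
  exists ls; rewrite e; split => //; rewrite b c; split; lia.
exists (ks ++ ls); split.
  rewrite blocks_S -/k; apply: (move_seq_cat (v := blocks L k0 len ++ f k :: blk k (L k))).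
    by have := move_seq_ctx [::] (blk k (L k)) m1; rewrite -catA.
  have := move_seq_ctx (blocks L k0 len) [::] m2; rewrite cats0 -catA /= addnS.
  by rewrite -catA.
have -> : iota k0 len.+1 = iota k0 len ++ [:: k] by rewrite -addn1 iotaD.
rewrite n_braids_cat n_comms_cat addnS -/k map_cat sumn_cat /=.
move: c1; rewrite -/k => c1; clearbody k; split; lia.
Qed.

Lemma move_seq_pre p u ks v : move_seq u ks v -> move_seq (p ++ u) ks (p ++ v).
Proof. by move/(move_seq_ctx p [::]); rewrite !cats0. Qed.
Lemma move_seq_suf q u ks v : move_seq u ks v -> move_seq (u ++ q) ks (v ++ q).
Proof. exact: (move_seq_ctx [::] q). Qed.

Lemma rot_swaps A q x r : foldl sw (A ++ q ++ x :: r) (blk (size A) (size q)) = A ++ x :: q ++ r.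
Proof.
elim/last_ind: q r => [|q z IH] r; first by [].
rewrite size_rcons /blk -addn1 iotaD rev_cat /= -/(blk _ _).
have -> : A ++ rcons q z ++ x :: r = (A ++ q) ++ z :: x :: r by rewrite cat_rcons catA.
have -> : size A + size q = size (A ++ q) by rewrite size_cat.
rewrite sw_cat -catA IH.
by rewrite cat_rcons.
Qed.

Section Perm.
Variable n : nat.
Variable p : seq nat.
Hypothesis hp : is_perm n p.

Lemma isp_size : size p = n.
Proof. by rewrite (perm_size hp) size_iota. Qed.
Lemma isp_uniq : uniq p.
Proof. by rewrite (perm_uniq hp) iota_uniq. Qed.
Lemma isp_mem v : (v \in p) = (v < n).
Proof. by rewrite (perm_mem hp) mem_iota. Qed.
Lemma isp_nth k : k < n -> nth 0 p k < n.
Proof. by move=> hk; rewrite -isp_mem mem_nth // isp_size. Qed.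

Definition St m := take m p ++ [seq v <- iota 0 n | v \notin take m p].

Lemma notin_take_drop m v : v < n -> (v \notin take m p) = (v \in drop m p).
Proof.
move=> hv.
have u : uniq (take m p ++ drop m p) by rewrite cat_take_drop isp_uniq.
have : v \in take m p ++ drop m p by rewrite cat_take_drop isp_mem.
rewrite mem_cat; case/orP => h.
  rewrite h /=; apply/esym/negP => h2.
  by move: u; rewrite cat_uniq => /and3P [_ /hasP hh _]; apply: hh; exists v.
rewrite h; apply/negP => h2.
by move: u; rewrite cat_uniq => /and3P [_ /hasP hh _]; apply: hh; exists v.
Qed.

Lemma count_mem_iota (D : seq nat) z : uniq D -> count (mem D) (iota 0 z) = count (fun v => v < z) D.
Proof.
move=> uD; rewrite -!size_filter; apply: perm_size.
apply: uniq_perm; first by apply: filter_uniq; apply: iota_uniq.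
  by apply: filter_uniq.
by move=> v; rewrite !mem_filter mem_iota /= andbC.
Qed.

Lemma cnt_vals m z : m <= n -> z <= n ->
  count (fun v => v \notin take m p) (iota 0 z) = count (fun l => nth 0 p l < z) (iota m (n - m)).
Proof.
move=> hm hz.
rewrite (@eq_in_count _ _ (mem (drop m p))); last first.
  by move=> v; rewrite mem_iota /= => hv; rewrite notin_take_drop //; lia.
rewrite count_mem_iota; last by apply: drop_uniq; apply: isp_uniq.
rewrite -(count_map (nth 0 p) (fun v => v < z)) map_nth_iota; last by rewrite isp_size.
by rewrite take_oversize // size_drop isp_size.
Qed.


Lemma iota_split_at x : x < n -> iota 0 n = iota 0 x ++ x :: iota x.+1 (n - x.+1).
Proof.
move=> hx; have {1}-> : n = x + (1 + (n - x.+1)) by lia.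
by rewrite iotaD iotaD /= add0n addn1.
Qed.

Definition Pm m := fun v => v \notin take m p.

Lemma St_split m : m < n -> St m = take m p ++
   [seq v <- iota 0 (nth 0 p m) | Pm m v] ++ nth 0 p m :: [seq v <- iota (nth 0 p m).+1 (n - (nth 0 p m).+1) | Pm m v].
Proof.
move=> hm; set x := nth 0 p m.
have hx : x < n by apply: isp_nth.
have Px : Pm m x.
  rewrite /Pm notin_take_drop // (drop_nth 0) ?isp_size // mem_head //.
by rewrite /St (iota_split_at hx) filter_cat /=; rewrite -/(Pm m x) Px.
Qed.

Lemma size_q m : m < n -> size [seq v <- iota 0 (nth 0 p m) | Pm m v] = code p m.
Proof.
move=> hm; rewrite size_filter /Pm cnt_vals; [|lia|apply: ltnW; apply: isp_nth => //].
have -> : n - m = (n - m.+1).+1 by lia.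
by rewrite /= ltnn add0n /code isp_size.
Qed.

Lemma St_next m : m < n -> St m.+1 = take m p ++ nth 0 p m ::
   [seq v <- iota 0 (nth 0 p m) | Pm m v] ++ [seq v <- iota (nth 0 p m).+1 (n - (nth 0 p m).+1) | Pm m v].
Proof.
move=> hm; set x := nth 0 p m.
have hx : x < n by apply: isp_nth.
rewrite /St (take_nth 0) ?isp_size // -/x (iota_split_at hx) filter_cat /=.
rewrite mem_rcons mem_head /= cat_rcons; congr (_ ++ _ :: _ ++ _).
  apply: eq_in_filter => v; rewrite mem_iota mem_rcons in_cons /Pm => /andP [_ h].
  by have -> : (v == x) = false by apply/eqP; lia.
apply: eq_in_filter => v; rewrite mem_iota mem_rcons in_cons /Pm => /andP [h _].
by have -> : (v == x) = false by apply/eqP; lia.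
Qed.

Lemma st_step m : m < n -> foldl sw (St m) (blk m (code p m)) = St m.+1.
Proof.
move=> hm; rewrite (St_split hm) (St_next hm) -(size_q hm).
set q := filter _ _; set r := filter _ _.
have := rot_swaps (take m p) q (nth 0 p m) r.
by rewrite size_take isp_size hm.
Qed.

Definition G m := blk m (code p m).

Lemma state_blocks m : m <= n -> foldl sw (iota 0 n) (flatten [seq G k | k <- iota 0 m]) = St m.
Proof.
elim: m => [|m IH] hm.
  by rewrite /St /= (@eq_in_filter _ _ predT) ?filter_predT // take0.
rewrite -addn1 iotaD map_cat flatten_cat foldl_cat IH; last lia.
by rewrite /= cats0 add0n addn1 st_step.
Qed.

Lemma St_n : St n = p.
Proof.
rewrite /St take_oversize ?isp_size //.
rewrite (@eq_in_filter _ _ pred0) ?filter_pred0 ?cats0 //.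
by move=> v; rewrite mem_iota isp_mem /= => ->.
Qed.


Lemma code_le k : k < n -> code p k <= n - k.+1.
Proof. by move=> hk; rewrite /code isp_size; apply: leq_trans (count_size _ _) _; rewrite size_iota. Qed.

Lemma lok_G k : k < n -> lok n (G k).
Proof.
move=> hk; apply/allP => y; rewrite mem_blk => /andP [a b].
have := code_le hk; lia.
Qed.

Lemma lok_flatten (s : seq nat) : all (fun k => k < n) s -> lok n (flatten [seq G k | k <- s]).
Proof.
elim: s => [|k s IH] //= /andP [hk hs].
by rewrite /lok all_cat; apply/andP; split; [apply: lok_G | apply: IH].
Qed.

Lemma size_St m : m <= n -> size (St m) = n.
Proof.
move=> hm; rewrite -(state_blocks hm) size_foldl ?size_iota //.
apply: lok_flatten; apply/allP => k; rewrite mem_iota; lia.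
Qed.

End Perm.

Definition vs (x y v : nat) := if v == x then y else if v == y then x else v.

Lemma sw_map f s a : a.+1 < size s -> sw (map f s) a = map f (sw s a).
Proof.
move=> h; have [A [y [z [q [-> <-]]]]] := seq_decomp2 h.
by rewrite sw_cat !map_cat /= -(size_map f A) sw_cat.
Qed.

Lemma foldl_map f s r : lok (size s) r -> foldl sw (map f s) r = map f (foldl sw s r).
Proof.
elim: r s => [|a r IH] s //= /andP [ha hr].
by rewrite sw_map // IH // size_sw.
Qed.

Lemma delete_at_cat (A B : seq nat) y : delete_at (size A) (A ++ y :: B) = A ++ B.
Proof. by rewrite /delete_at take_size_cat // -cat_rcons drop_size_cat // size_rcons. Qed.

Lemma del_blk m a e : e < a -> delete_at e (blk m a) = blk (m + a - e) e ++ blk m (a - e - 1).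
Proof.
move=> h; rewrite /blk.
have -> : a = (a - e - 1) + (1 + e) by lia.
rewrite iotaD iotaD rev_cat rev_cat /= -catA /=.
set A := rev (iota (m + (a - e - 1) + 1) e).
have hA : size A = e by rewrite size_rev size_iota.
rewrite -{1}hA delete_at_cat /A; congr (rev (iota _ _) ++ rev (iota _ _)); lia.
Qed.

Lemma map_vs_id (s : seq nat) x y : x \notin s -> y \notin s -> map (vs x y) s = s.
Proof.
elim: s => [|v s IH] //=; rewrite !in_cons !negb_or => /andP [h1 h2] /andP [h3 h4].
by rewrite IH // /vs eq_sym (negbTE h1) eq_sym (negbTE h3).
Qed.

Section Del.
Variable n : nat.
Variable p : seq nat.
Hypothesis hp : is_perm n p.

Lemma del_state m e : m < n -> e < code p m ->
  foldl sw (St n p m) (delete_at e (G p m)) =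
  map (vs (nth 0 p m) (nth 0 [seq v <- iota 0 (nth 0 p m) | Pm p m v] (code p m - e - 1))) (St n p m.+1).
Proof.
move=> hm he.
rewrite (St_split hp hm) (St_next hp hm).
set x := nth 0 p m; set q := filter _ (iota 0 x); set r := filter _ _.
set A := take m p.
have sA : size A = m by rewrite size_take (isp_size hp) hm.
have sq : size q = code p m := size_q hp hm.
set a := code p m in he sq *.
set y := nth 0 q (a - e - 1).
have hq : q = take (a - e - 1) q ++ y :: drop (a - e) q.
  rewrite -{1}(cat_take_drop (a - e - 1) q) (drop_nth 0); last lia.
  by have -> : (a - e - 1).+1 = a - e by lia.
set q1 := take _ q in hq; set q2 := drop _ q in hq.
have s1 : size q1 = a - e - 1 by rewrite size_take; case: ifP; lia.
have s2 : size q2 = e by rewrite size_drop; lia.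
have uq : uniq q by apply: filter_uniq; apply: iota_uniq.
have yq : y \in q by rewrite hq mem_cat mem_head orbT.
have Py : Pm p m y by move: yq; rewrite mem_filter => /andP [].
have yx : y < x by move: yq; rewrite mem_filter mem_iota => /andP [_ /andP [_ ]].
have Px : Pm p m x.
  rewrite /Pm (notin_take_drop hp) ?(isp_nth hp) // (drop_nth 0) ?(isp_size hp) // mem_head //.
rewrite /G (del_blk m he) foldl_cat hq.
have -> : A ++ (q1 ++ y :: q2) ++ x :: r = (A ++ q1 ++ [:: y]) ++ q2 ++ x :: r by rewrite -!catA.
have -> : m + a - e = size (A ++ q1 ++ [:: y]) by rewrite !size_cat sA s1 /=; lia.
rewrite -s2 rot_swaps s2 -catA -catA /=.
have -> : a - e - 1 = size q1 by [].
rewrite -{1}sA rot_swaps map_cat /= /vs eqxx.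
rewrite -/(vs x y).
move: uq; rewrite hq cat_uniq /= => /and4P [u1 /norP [yq1 _] /negP yq2 u2].
have xq : forall v, v \in q -> v < x by move=> v; rewrite mem_filter mem_iota => /andP [_ /andP [_]].
have vy : vs x y y = x by rewrite /vs (ltn_eqF yx) eqxx.
rewrite !map_cat /= vy -catA.
have xA : x \notin A := Px.
have yA : y \notin A := Py.
have xq1 : x \notin q1 by apply/negP => h; have := xq x; rewrite hq mem_cat h ltnn => /(_ isT).
have xq2 : x \notin q2.
  by apply/negP => h; have := xq x; rewrite hq mem_cat in_cons h !orbT ltnn => /(_ isT).
have yq2' : y \notin q2 by apply/negP.
have xr : x \notin r by rewrite /r mem_filter mem_iota ltnn /= andbF.
have yr : y \notin r by rewrite /r mem_filter mem_iota; apply/negP => /andP [_ /andP [h _]]; lia.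
by rewrite (map_vs_id xA yA) (map_vs_id xq1 yq1) (map_vs_id xq2 yq2') (map_vs_id xr yr).
Qed.
End Del.

Lemma delete_at_catl (s t : seq nat) I : I < size s -> delete_at I (s ++ t) = delete_at I s ++ t.
Proof.
move=> h; rewrite /delete_at take_cat h drop_cat.
case: ifP => h2; first by rewrite catA.
have e : I.+1 = size s by move/negbT: h2; rewrite -leqNgt; lia.
by rewrite e subnn drop0 drop_size cats0.
Qed.

Lemma delete_at_catr (s t : seq nat) I : size s <= I -> delete_at I (s ++ t) = s ++ delete_at (I - size s) t.
Proof.
move=> h; rewrite /delete_at take_cat drop_cat.
have -> : (I < size s) = false by apply/negbTE; rewrite -leqNgt.
have -> : (I.+1 < size s) = false by apply/negbTE; rewrite -leqNgt; lia.
by rewrite catA; have -> : I.+1 - size s = (I - size s).+1 by lia.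
Qed.

Lemma flatten_del (ss : seq (seq nat)) I : I < size (flatten ss) ->
  exists m e, m < size ss /\ e < size (nth [::] ss m) /\ I = size (flatten (take m ss)) + e /\
    delete_at I (flatten ss) = flatten (take m ss) ++ delete_at e (nth [::] ss m) ++ flatten (drop m.+1 ss).
Proof.
elim: ss I => [|s ss IH] I //=.
rewrite size_cat => hI.
case: (ltnP I (size s)) => h.
  exists 0, I; rewrite /=; split => //; split => //; split => //.
  by rewrite drop0 delete_at_catl.
have [m [e [h1 [h2 [h3 h4]]]]] := IH (I - size s) ltac:(lia).
exists m.+1, e; rewrite /= size_cat; split => //; split => //; split; first lia.
by rewrite delete_at_catr // h4 -!catA.
Qed.

Section Del2.
Variable n : nat.
Variable p : seq nat.
Hypothesis hp : is_perm n p.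

Lemma row_wordE : row_word p = flatten [seq G p k | k <- iota 0 n].
Proof. by rewrite /row_word (isp_size hp). Qed.

Lemma row_word_del I : I < size (row_word p) -> exists m e, m < n /\ e < code p m /\
   I = size (flatten [seq G p k | k <- iota 0 m]) + e /\
   word_perm n (delete_at I (row_word p)) =
   map (vs (nth 0 p m) (nth 0 [seq v <- iota 0 (nth 0 p m) | Pm p m v] (code p m - e - 1))) p.
Proof.
rewrite row_wordE => hI.
have [m [e [h1 [h2 [h3 h4]]]]] := flatten_del hI.
rewrite size_map size_iota in h1.
have Em : nth [::] [seq G p k | k <- iota 0 n] m = G p m.
  by rewrite (nth_map 0) ?size_iota // nth_iota.
have Et : take m [seq G p k | k <- iota 0 n] = [seq G p k | k <- iota 0 m].
  by rewrite -map_take take_iota; congr (map _ (iota _ _)); lia.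
have Ed : drop m.+1 [seq G p k | k <- iota 0 n] = [seq G p k | k <- iota m.+1 (n - m.+1)].
  by rewrite -map_drop drop_iota.
rewrite Em in h2; rewrite Em Et Ed in h4; rewrite Et in h3.
have h2' : e < code p m by move: h2; rewrite /G /blk size_rev size_iota.
exists m, e; split => //; split => //; split => //.
rewrite word_permE h4 2!foldl_cat (state_blocks hp (ltnW h1)) (del_state hp h1 h2').
rewrite foldl_map; last first.
  rewrite (size_St hp h1); apply: (lok_flatten hp); apply/allP => k; rewrite mem_iota; lia.
congr (map _ _).
have := state_blocks hp (leqnn n).
have E : iota 0 n = iota 0 m.+1 ++ iota m.+1 (n - m.+1) by rewrite -iotaD; congr iota; lia.
rewrite {2}E map_cat flatten_cat foldl_cat (state_blocks hp h1) (St_n hp).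
by move=> ->.
Qed.
End Del2.

Lemma iota_split3 k j n : k <= j -> j < n ->
  iota k (n - k) = iota k (j - k) ++ j :: iota j.+1 (n - j.+1).
Proof.
move=> h1 h2; have {1}-> : n - k = (j - k) + (1 + (n - j.+1)) by lia.
rewrite iotaD iotaD /=; congr (_ ++ _ :: iota _ _); lia.
Qed.

Lemma count_or (P Q : pred nat) s : (forall x, x \in s -> ~~ (P x && Q x)) ->
  count (fun x => P x || Q x) s = count P s + count Q s.
Proof.
elim: s => [|x s IH] //= h.
rewrite IH; last by move=> y hy; apply: h; rewrite in_cons hy orbT.
have := h x (mem_head _ _); case: (P x); case: (Q x) => //= _; lia.
Qed.

Section Cover.
Variable n : nat.
Variable v : seq nat.
Variables i j : nat.
Hypothesis hp : is_perm n v.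
Hypothesis hij : i < j.
Hypothesis hjn : j < n.
Hypothesis hlt : nth 0 v i < nth 0 v j.
Hypothesis hcov : forall k, i < k < j -> ~ (nth 0 v i < nth 0 v k < nth 0 v j).

Definition wsw := swap_pos v i j.

Lemma nth_w k : nth 0 wsw k = if k == j then nth 0 v i else if k == i then nth 0 v j else nth 0 v k.
Proof. by rewrite /wsw /swap_pos !nth_set_nth /= !nth_set_nth. Qed.

Lemma size_w : size wsw = n.
Proof. rewrite /wsw /swap_pos !size_set_nth (isp_size hp); lia. Qed.

Lemma uv : uniq v. Proof. exact: isp_uniq hp. Qed.
Lemma sv : size v = n. Proof. exact: isp_size hp. Qed.

Lemma nthv_inj k l : k < n -> l < n -> (nth 0 v k == nth 0 v l) = (k == l).
Proof. by move=> hk hl; rewrite nth_uniq ?sv ?uv. Qed.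

Definition tau k := if k == j then i else if k == i then j else k.

Lemma tau_tau k : tau (tau k) = k.
Proof.
rewrite /tau; case: (eqVneq k j) => [->|h1].
  by rewrite (ltn_eqF hij) eqxx.
case: (eqVneq k i) => [->|h2]; first by rewrite eqxx.
by rewrite (negbTE h1) (negbTE h2).
Qed.

Lemma tau_lt k : k < n -> tau k < n.
Proof. rewrite /tau; case: eqP => _; try lia; case: eqP => _; lia. Qed.

Lemma nth_w_tau k : nth 0 wsw k = nth 0 v (tau k).
Proof. by rewrite nth_w /tau; case: eqP => //; case: eqP. Qed.

Lemma wperm : is_perm n wsw.
Proof.
apply: uniq_perm; last first.
  - move=> x; rewrite mem_iota /=; apply/idP/idP.
      move/(nthP 0) => [k hk <-]; rewrite nth_w_tau -(isp_mem hp) mem_nth // sv.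
      by apply: tau_lt; rewrite -size_w.
    move=> hx; have : x \in v by rewrite (isp_mem hp).
    move/(nthP 0) => [k hk <-]; rewrite sv in hk.
    rewrite -(tau_tau k) -nth_w_tau; apply: mem_nth; rewrite size_w; exact: tau_lt.
  - exact: iota_uniq.
apply/(uniqP 0) => k l; rewrite !inE size_w => hk hl.
rewrite !nth_w_tau => /eqP; rewrite nthv_inj; try exact: tau_lt.
by move=> /eqP /(congr1 tau); rewrite !tau_tau.
Qed.

Notation A := (nth 0 v i).
Notation B := (nth 0 v j).

Lemma nth_w_i : nth 0 wsw i = B.
Proof. by rewrite nth_w (ltn_eqF hij) eqxx. Qed.
Lemma nth_w_j : nth 0 wsw j = A.
Proof. by rewrite nth_w eqxx. Qed.
Lemma nth_w_o k : k != i -> k != j -> nth 0 wsw k = nth 0 v k.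
Proof. by move=> h1 h2; rewrite nth_w (negbTE h1) (negbTE h2). Qed.

Lemma cnt_wv (P : nat -> bool) a b : (forall l, a <= l < a + b -> l != i /\ l != j) ->
  count (fun l => P (nth 0 wsw l)) (iota a b) = count (fun l => P (nth 0 v l)) (iota a b).
Proof.
move=> h; apply: eq_in_count => l; rewrite mem_iota => /h [h1 h2].
by rewrite nth_w_o.
Qed.

Lemma vk_ne k : k < n -> k != i -> k != j -> nth 0 v k != A /\ nth 0 v k != B.
Proof. by move=> hk h1 h2; rewrite !nthv_inj //; lia. Qed.

Lemma vk_cases k : i < k < j -> (nth 0 v k < A) || (B < nth 0 v k).
Proof.
move=> hk; have [h1 h2] := vk_ne (k := k) ltac:(lia) ltac:(apply/eqP; lia) ltac:(apply/eqP; lia).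
have h3 := hcov hk; move: h1 h2 h3; set x := nth 0 v k => h1 h2 h3.
apply/orP; case: (ltnP x A) => ha; [by left|right].
have hA : A < x by rewrite ltn_neqAle eq_sym h1 ha.
rewrite ltnNge; apply/negP => hB; apply: h3; rewrite hA /= ltn_neqAle h2 hB //.
Qed.

Lemma codeE p k : code p k = count (fun l => nth 0 p l < nth 0 p k) (iota k.+1 (size p - k.+1)).
Proof. by []. Qed.

Lemma code_w_other k : k < n -> k != i -> k != j -> code wsw k = code v k.
Proof.
move=> hk h1 h2; rewrite !codeE size_w sv nth_w_o //.
set x := nth 0 v k.
case: (ltnP j k) => hjk.
  by apply: (cnt_wv (fun y => y < x)) => l hl; split; apply/eqP; lia.
rewrite (iota_split3 (k := k.+1) (j := j)); last 2 first.
- have : k != j by []; lia.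
- done.
rewrite !count_cat /= nth_w_j.
rewrite (cnt_wv (fun y => y < x) (a := j.+1)); last by move=> l hl; split; apply/eqP; lia.
case: (ltnP i k) => hik.
  rewrite (cnt_wv (fun y => y < x) (a := k.+1)); last by move=> l hl; split; apply/eqP; lia.
  have hc := vk_cases (k := k) ltac:(have : k != j by []; lia).
  have [n1 n2] := vk_ne hk h1 h2.
  congr (_ + (_ + _)); rewrite -/x in hc n1 n2.
  by move: hc; case: (ltngtP x A); case: (ltngtP x B) => //; lia.
have hki : k < i by have : k != i by []; lia.
rewrite (iota_split3 (k := k.+1) (j := i)) // !count_cat /= nth_w_i.
rewrite (cnt_wv (fun y => y < x) (a := k.+1)); last by move=> l hl; split; apply/eqP; lia.
rewrite (cnt_wv (fun y => y < x) (a := i.+1)); last by move=> l hl; split; apply/eqP; lia.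
lia.
Qed.

Definition d := count (fun l => A < nth 0 v l < B) (iota j.+1 (n - j.+1)).
Definition a k := count (fun l => nth 0 v l < A) (iota k (n - k)).

Lemma split_B : count (fun l => nth 0 v l < B) (iota j.+1 (n - j.+1)) =
  count (fun l => nth 0 v l < A) (iota j.+1 (n - j.+1)) + d.
Proof.
rewrite /d -count_or; last first.
  by move=> l _; case: (ltngtP (nth 0 v l) A).
apply: eq_in_count => l; rewrite mem_iota => hl.
have [n1 n2] := vk_ne (k := l) ltac:(lia) ltac:(apply/eqP; lia) ltac:(apply/eqP; lia).
move: n1 n2; set x := nth 0 v l => n1 n2.
case: (ltngtP x A) => h /=; [by apply: ltn_trans hlt| |by rewrite h eqxx in n1].
by [].
Qed.

Lemma code_w_i : code wsw i = code v i + 1 + d.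
Proof.
rewrite !codeE size_w sv nth_w_i.
rewrite (iota_split3 (k := i.+1) (j := j)) // !count_cat /= nth_w_j hlt.
rewrite (cnt_wv (fun y => y < B) (a := j.+1)); last by move=> l hl; split; apply/eqP; lia.
rewrite (cnt_wv (fun y => y < B) (a := i.+1)); last by move=> l hl; split; apply/eqP; lia.
rewrite split_B ltnNge (ltnW hlt) /=.
have -> : count (fun l => nth 0 v l < B) (iota i.+1 (j - i.+1)) =
          count (fun l => nth 0 v l < A) (iota i.+1 (j - i.+1)).
  apply: eq_in_count => l; rewrite mem_iota => hl.
  have hc := vk_cases (k := l) ltac:(lia).
  have [n1 n2] := vk_ne (k := l) ltac:(lia) ltac:(apply/eqP; lia) ltac:(apply/eqP; lia).
  move: hc n1 n2; set x := nth 0 v l => hc n1 n2.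
  case/orP: hc => h.
    by rewrite h (ltn_trans h hlt).
  by rewrite ltnNge (ltnW h) /= ltnNge (ltnW (ltn_trans hlt h)).
lia.
Qed.

Lemma code_v_j : code v j = code wsw j + d.
Proof.
rewrite !codeE size_w sv nth_w_j split_B.
by rewrite (cnt_wv (fun y => y < A) (a := j.+1)) //; move=> l hl; split; apply/eqP; lia.
Qed.

Lemma a_S k : k < n -> a k = (nth 0 v k < A) + a k.+1.
Proof. by move=> hk; rewrite /a; have -> : n - k = (n - k.+1).+1 by lia. Qed.

Lemma a_i1 : a i.+1 = code v i.
Proof. by rewrite /a codeE sv. Qed.

Lemma a_j : a j = code wsw j.
Proof.
rewrite (a_S hjn) ltnNge (ltnW hlt) /= codeE size_w nth_w_j /a.
by rewrite (cnt_wv (fun y => y < A) (a := j.+1)) //; move=> l hl; split; apply/eqP; lia.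
Qed.

Lemma F1 k : i < k < j -> nth 0 v k < A -> code v k < a k.
Proof.
move=> hk h; rewrite (a_S (k := k)) ?h; last lia.
rewrite codeE sv add1n ltnS /a; apply: sub_count => l /= hl; exact: ltn_trans hl h.
Qed.

Lemma F2 k : i < k < j -> B < nth 0 v k -> a k.+1 + d < code v k.
Proof.
move=> hk h; rewrite codeE sv /a.
rewrite (iota_split3 (k := k.+1) (j := j)); try lia.
rewrite !count_cat /= h; have -> : (B < A) = false by rewrite ltnNge (ltnW hlt).
have s1 : count (fun l => nth 0 v l < A) (iota k.+1 (j - k.+1)) <=
          count (fun l => nth 0 v l < nth 0 v k) (iota k.+1 (j - k.+1)).
  apply: sub_count => l /= hl; apply: ltn_trans hl (ltn_trans hlt h).
have s2 : count (fun l => nth 0 v l < B) (iota j.+1 (n - j.+1)) <=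
          count (fun l => nth 0 v l < nth 0 v k) (iota j.+1 (n - j.+1)).
  apply: sub_count => l /= hl; apply: ltn_trans hl h.
rewrite split_B in s2.
lia.
Qed.

Definition c := i + code v i.
Definition e := j + code wsw j.
Definition Wmid := blk i (code v i) ++ blocks (code v) i.+1 (j - i.+1).
Definition Ssum := code v i + sumn [seq code v k | k <- iota i.+1 (j - i.+1)].

Lemma letter m : 1 <= m <= d -> exists ks, move_seq ((c + m) :: Wmid) ks (Wmid ++ [:: e + m - 1]) /\
   c + 1 + n_braids ks = e /\ n_comms ks + 2 * n_braids ks = Ssum.
Proof.
move=> hm.
have h1 := comm_through (x := c + m) (s := blk i (code v i)).
have {h1} h1 : move_seq ((c + m) :: blk i (code v i)) (nseq (code v i) Commutation) (rcons (blk i (code v i)) (c + m)).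
  have := h1 ltac:(by apply/allP => y; rewrite mem_blk /c => /andP [_ hy]; apply/orP; left; lia).
  by rewrite /blk size_rev size_iota.
set f := fun k => k + a k + m - 1.
have hf0 : f i.+1 = c + m by rewrite /f a_i1 /c; lia.
have hf1 : f (i.+1 + (j - i.+1)) = e + m - 1.
  rewrite /f (_ : i.+1 + (j - i.+1) = j); last lia.
  rewrite a_j /e; lia.
have [ks [m2 [b2 c2]]] : exists ks, move_seq (f i.+1 :: blocks (code v) i.+1 (j - i.+1)) ks
     (blocks (code v) i.+1 (j - i.+1) ++ [:: f (i.+1 + (j - i.+1))]) /\
    f i.+1 + n_braids ks = f (i.+1 + (j - i.+1)) /\
    n_comms ks + 2 * n_braids ks = sumn [seq code v k | k <- iota i.+1 (j - i.+1)].
  apply: pass_range => k hk; have hk' : i < k < j by lia.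
  case/orP: (vk_cases hk') => h.
    left; have := F1 hk' h; have := a_S (k := k) ltac:(lia); rewrite h /f; split; lia.
  right; have := F2 hk' h; have := a_S (k := k) ltac:(lia).
  rewrite ltnNge (ltnW (ltn_trans hlt h)) /= /f => E1 E2; split; first lia; split; lia.
rewrite hf0 hf1 in m2 b2.
exists (nseq (code v i) Commutation ++ ks); split.
  apply: (move_seq_cat (v := blk i (code v i) ++ (c + m) :: blocks (code v) i.+1 (j - i.+1))).
    by have := move_seq_ctx [::] (blocks (code v) i.+1 (j - i.+1)) h1; rewrite cat_rcons.
  by have := move_seq_pre (blk i (code v i)) m2; rewrite -catA.
rewrite n_braids_cat n_comms_cat n_braids_nseq n_comms_nseq /Ssum; split; lia.
Qed.

Lemma blk_S t m : blk t m.+1 = (t + m) :: blk t m.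
Proof. by rewrite /blk -addn1 iotaD rev_cat. Qed.

Lemma letters m : m <= d -> exists ks, move_seq (blk (c + 1) m ++ Wmid) ks (Wmid ++ blk e m) /\
   n_braids ks = m * (e - c - 1) /\ n_comms ks + 2 * n_braids ks = m * Ssum.
Proof.
elim: m => [|m IH] hm.
  by exists [::]; rewrite /= cats0; split => //; apply: (@move_seq_nil Wmid).
have [ks [m1 [b1 c1]]] := IH (ltnW hm).
have [ls [m2 [b2 c2]]] := letter (m := m.+1) ltac:(lia).
exists (ks ++ ls); split.
  rewrite blk_S blk_S; apply: (move_seq_cat (v := (c + 1 + m) :: Wmid ++ blk e m)).
    exact: (move_seq_pre [:: c + 1 + m] m1).
  have := move_seq_suf (blk e m) m2.
  rewrite (_ : c + m.+1 = c + 1 + m); last lia.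
  rewrite (_ : e + m.+1 - 1 = e + m); last lia.
  by rewrite -catA.
rewrite n_braids_cat n_comms_cat; split; nia.
Qed.

Lemma I_val I : I < size (row_word wsw) -> word_perm n (delete_at I (row_word wsw)) = v ->
  I = size (flatten [seq G wsw k | k <- iota 0 i]) + d.
Proof.
move=> hI hwp.
have [m [e0 [hm [he0 [hI' hw']]]]] := row_word_del wperm hI.
rewrite hwp in hw'.
move: hw'; set X := nth 0 wsw m; set q := filter _ _; set Y := nth 0 q _ => hw'.
have sq : size q = code wsw m := size_q wperm hm.
have Yq : Y \in q by apply: mem_nth; lia.
have YX : Y < X by move: Yq; rewrite mem_filter mem_iota => /andP [_ /andP [_]].
have PY : Pm wsw m Y by move: Yq; rewrite mem_filter => /andP [].
have vm : nth 0 v m = Y by rewrite hw' (nth_map 0) ?size_w // /vs eqxx.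
case: (eqVneq m i) => [Emi|hmi]; last first.
  case: (eqVneq m j) => [Emj|hmj].
    move: YX; rewrite /X -vm Emj nth_w_j => h.
    by move: (ltn_trans h hlt); rewrite ltnn.
  by move: YX; rewrite /X -vm nth_w_o // ltnn.
subst m.
have XB : X = B by rewrite /X nth_w_i.
have YA : Y = A by rewrite -vm.
have AB : A < B := hlt.
have hq : q = [seq x <- iota 0 A | Pm wsw i x] ++ A :: [seq x <- iota A.+1 (B - A.+1) | Pm wsw i x].
  rewrite /q XB (iota_split_at AB) filter_cat /=.
  by move: PY; rewrite YA => ->.
have uq : uniq q by apply: filter_uniq; apply: iota_uniq.
set q1 := filter _ (iota 0 A) in hq.
have nq : nth 0 q (size q1) = A by rewrite hq nth_cat ltnn subnn.
have hidx : code wsw i - e0 - 1 = size q1.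
  apply/eqP; rewrite -(nth_uniq 0 _ _ uq); first by rewrite nq -/Y YA.
    lia.
  by rewrite hq size_cat /=; lia.
have s1 : size q1 = code v i.
  rewrite /q1 size_filter (cnt_vals wperm); [|lia|].
    have -> : n - i = (n - i.+1).+1 by lia.
    rewrite /= nth_w_i ltnNge (ltnW hlt) /= add0n codeE sv.
    apply: eq_in_count => l; rewrite mem_iota => hl.
    case: (eqVneq l j) => [->|hlj].
      by rewrite nth_w_j ltnn ltnNge (ltnW hlt).
    by rewrite nth_w_o //; apply/eqP; lia.
  by apply: ltnW; apply: (isp_nth hp); lia.
have := code_w_i; lia.
Qed.

Lemma blk_add t m1 m2 : blk t (m1 + m2) = blk (t + m1) m2 ++ blk t m1.
Proof. by rewrite /blk iotaD rev_cat. Qed.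

Definition pre := flatten [seq G v k | k <- iota 0 i].
Definition post := flatten [seq G v k | k <- iota j.+1 (n - j.+1)].

Lemma iota_0n : iota 0 n = iota 0 i ++ i :: iota i.+1 (j - i.+1) ++ j :: iota j.+1 (n - j.+1).
Proof.
have := iota_split3 (k := 0) (j := i) (n := n) ltac:(lia) ltac:(lia); rewrite !subn0 => ->.
by rewrite (iota_split3 (k := i.+1) (j := j)).
Qed.

Lemma eqG (s : seq nat) : (forall k, k \in s -> k < n /\ k != i /\ k != j) ->
  [seq G wsw k | k <- s] = [seq G v k | k <- s].
Proof.
move=> h; apply/eq_in_map => k /h [h1 [h2 h3]].
by rewrite /G code_w_other.
Qed.

Lemma row_v : row_word v = pre ++ Wmid ++ blk e d ++ blk j (code wsw j) ++ post.
Proof.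
rewrite (row_wordE hp) iota_0n; rewrite !(map_cat, flatten_cat) /=; rewrite !(map_cat, flatten_cat) /=.
rewrite /pre /post /Wmid /blocks -!catA; congr (_ ++ _); congr (_ ++ _); congr (_ ++ _).
by rewrite {1}/G code_v_j blk_add -catA.
Qed.

Lemma row_w_del : delete_at (size (flatten [seq G wsw k | k <- iota 0 i]) + d) (row_word wsw) =
   pre ++ blk (c + 1) d ++ Wmid ++ blk j (code wsw j) ++ post.
Proof.
rewrite (row_wordE wperm) iota_0n; rewrite !(map_cat, flatten_cat) /=; rewrite !(map_cat, flatten_cat) /=.
have h1 : d < code wsw i by rewrite code_w_i; lia.
rewrite delete_at_catr ?leq_addr // addKn delete_at_catl; last first.
  by rewrite /G /blk size_rev size_iota.
rewrite /G (del_blk i h1).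
rewrite (eqG (s := iota 0 i)); last by move=> k; rewrite mem_iota; split; [lia|split; apply/eqP; lia].
rewrite (eqG (s := iota i.+1 (j - i.+1))); last by move=> k; rewrite mem_iota; split; [lia|split; apply/eqP; lia].
rewrite (eqG (s := iota j.+1 (n - j.+1))); last by move=> k; rewrite mem_iota; split; [lia|split; apply/eqP; lia].
rewrite /pre /post /Wmid /blocks -!catA /c code_w_i.
have -> : i + (code v i + 1 + d) - d = i + code v i + 1 by lia.
by have -> : code v i + 1 + d - d - 1 = code v i by lia.
Qed.

Lemma main_exists : exists fs,
  move_seq (pre ++ blk (c + 1) d ++ Wmid ++ blk j (code wsw j) ++ post) fs
           (pre ++ Wmid ++ blk e d ++ blk j (code wsw j) ++ post) /\
  n_braids fs = d * (e - c - 1) /\ n_comms fs + 2 * n_braids fs = d * Ssum.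
Proof.
have [ks [m1 [b1 c1]]] := letters (leqnn d).
exists ks; split => //.
have := move_seq_pre pre (move_seq_suf (blk j (code wsw j) ++ post) m1).
by rewrite -!catA.
Qed.

Lemma e_ge : c + 1 <= e.
Proof.
have key : forall k, k <= j - i.+1 -> a i.+1 <= k + a (i.+1 + k).
  elim => [|k IH] hk; first by rewrite addn0.
  have := IH (ltnW hk); have := a_S (k := i.+1 + k) ltac:(lia).
  rewrite addnS; lia.
have := key (j - i.+1) (leqnn _).
rewrite (_ : i.+1 + (j - i.+1) = j); last lia.
rewrite a_j a_i1 /c /e; lia.
Qed.

End Cover.

Local Open Scope ring_scope.

Lemma sum_Posz (F : nat -> nat) (s : seq nat) :
  (\sum_(k <- s) (F k)%:Z)%R = (sumn [seq F k | k <- s])%N%:Z.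
Proof. by elim: s => [|x s IH]; rewrite ?big_nil ?big_cons ?IH ?PoszD. Qed.


Unset Implicit Arguments.

Theorem proposition4p3 (n : nat) (w w' : seq nat) (i j I : nat) :
  is_perm n w' ->
  (i < j)%N -> (j < n)%N ->
  (nth 0 w' i < nth 0 w' j)%N ->
  (forall k, (i < k < j)%N -> ~ (nth 0 w' i < nth 0 w' k < nth 0 w' j)%N) ->
  w = swap_pos w' i j ->
  (I < size (row_word w))%N ->
  reduced_word n (delete_at I (row_word w)) w' ->
  exists fs : seq move_kind,
    move_seq (delete_at I (row_word w)) fs (row_word w') /\
    (n_braids fs)%:Z =
      ((code w i)%:Z - (code w' i)%:Z - 1) *
      ((j%:Z - i%:Z - 1) + (code w j)%:Z - (code w' i)%:Z) /\
    (n_comms fs)%:Z =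
      ((code w i)%:Z - (code w' i)%:Z - 1) *
      ((\sum_(i <= k < j) (code w' k)%:Z) -
        2 * ((j%:Z - i%:Z - 1) + (code w j)%:Z - (code w' i)%:Z)) /\
    (forall gs : seq move_kind,
       move_seq (delete_at I (row_word w)) gs (row_word w') ->
       odd (n_braids gs) = odd (n_braids fs) /\
       odd (n_comms gs) = odd (n_comms fs)).
Proof.
move=> hp hij hjn hlt hcov hw hI [hl [hwp hsz]].
have ew : w = wsw w' i j by [].
rewrite ew in hI hwp hl *.
have EI := I_val hp hij hjn hlt hcov hI hwp.
have [fs [mf [bf cf]]] := main_exists hp hij hjn hlt hcov.
have ege := e_ge hp hij hjn hlt.
have cwi := code_w_i hp hij hjn hlt hcov.
exists fs.
have mf' : move_seq (delete_at I (row_word (wsw w' i j))) fs (row_word w').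
  by rewrite EI (row_w_del hp hij hjn hlt hcov) (row_v hp hij hjn hlt).
split => //.
have E1 : (code (wsw w' i j) i)%:Z - (code w' i)%:Z - 1 = (d n w' i j)%:Z by rewrite cwi; lia.
have E2 : (j%:Z - i%:Z - 1) + (code (wsw w' i j) j)%:Z - (code w' i)%:Z =
          (e w' i j - c w' i - 1)%:Z by move: ege; rewrite /e /c; lia.
have E3 : (\sum_(i <= k < j) (code w' k)%:Z) = (Ssum w' i j)%:Z.
  rewrite big_ltn // sum_Posz /Ssum PoszD; congr (_ + _%:Z).
rewrite E1 E2 E3; split; last split.
- by rewrite bf PoszM.
- move: cf; rewrite bf => cf.
  have : (n_comms fs)%:Z = (d n w' i j * Ssum w' i j)%:Z - 2 * (d n w' i j * (e w' i j - c w' i - 1))%:Z.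
    rewrite -cf PoszD PoszM; ring.
  move=> ->; rewrite !PoszM; ring.
move=> gs hg.
exact: (parity_unique hl mf' hg).
Qed.
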